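(* Fix an integer $q\ge 2$. There exist constants $c>0$ and $n_0$ depending only on $q$ such that for all $n \ge n_0$, all positive integers $t \le 10\sqrt{n}$, and all $S \subseteq [q]^n$ with $|S| \ge n^4 H_q(n,t)$, we have \[ \Delta(G[S]) \ge c\,\frac{n^{3/2}}{H_q(n,t)}\,|S|. \]
   Context: $d(x,y)$ is the Hamming distance on $[q]^n$ (number of differing coordinates). $V_q(n,r) = \sum_{i=0}^{r}\binom{n}{i}(q-1)^i$ and $H_q(n,t) = q^n / V_q(n,t)$. $G = G_{q,n,t}$ is the graph with vertex set $[q]^n$ in which two distinct vertices are adjacent iff their Hamming distance is at most $2t$; $G[S]$ is its induced subgraph on $S$, and $\Delta(\cdot)$ denotes maximum degree. *)

(* Defs.v *)
From mathcomp Require Import all_boot all_order all_algebra.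
From mathcomp Require Import reals.
Set Implicit Arguments. Unset Strict Implicit. Unset Printing Implicit Defensive.
Import Order.TTheory GRing.Theory Num.Theory.

Definition word (q n : nat) := {ffun 'I_n -> 'I_q}.

Definition hamming (q n : nat) (x y : word q n) : nat :=
  #|[set i : 'I_n | x i != y i]|.

Definition Vq (q n r : nat) : nat :=
  \sum_(0 <= i < r.+1) 'C(n, i) * (q - 1) ^ i.

Definition Hq (R : realType) (q n t : nat) : R :=
  (q ^ n)%:R / (Vq q n t)%:R.

Definition Gadj (q n t : nat) (x y : word q n) : bool :=
  (x != y) && (hamming x y <= 2 * t).

Definition deg_in (q n t : nat) (S : {set word q n}) (v : word q n) : nat :=
  #|[set u in S | Gadj t v u]|.

(* Maximum degree of G[S] (0 if S is empty). *)
Definition maxdeg (q n t : nat) (S : {set word q n}) : nat :=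
  \max_(v in S) deg_in t S v.

(* Main.v *)
Require Import Defs.
From mathcomp Require Import all_boot all_order all_algebra.
From mathcomp Require Import reals.
From mathcomp Require Import zify ring lra.
Set Implicit Arguments. Unset Strict Implicit.

Lemma card_fam q n (P : 'I_n -> 'I_q -> bool) :
  #|[set z : word q n | [forall i, P i (z i)]]| = \prod_(i < n) #|[pred c | P i c]|.
Proof.
have -> : #|[set z : word q n | [forall i, P i (z i)]]| = #|family (fun i => [pred c | P i c])|.
  apply: eq_card => z; rewrite inE; apply/forallP/familyP => H i; exact: H.
rewrite card_family; rewrite /image_mem enumT /index_enum /=.
elim: (Finite.enum _) => [|a s IH]; first by rewrite big_nil.
by rewrite big_cons /= IH.
Qed.

Section Comb.
Variables (q n : nat).
Implicit Types (x y z : word q n).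
Definition diff x y := [set i : 'I_n | x i != y i].
Lemma hammingE x y : hamming x y = #|diff x y|. Proof. by []. Qed.
Lemma diffC x y : diff x y = diff y x.
Proof. by apply/setP => i; rewrite !inE eq_sym. Qed.
Definition ball x r := [set z : word q n | hamming x z <= r].

Lemma card_neq (a : 'I_q) : #|[pred c | a != c]| = q - 1.
Proof.
have := cardC1 a; rewrite card_ord subn1 => <-.
by apply: eq_card => c; rewrite !inE eq_sym.
Qed.

Lemma card_eqA x (A : {set 'I_n}) : #|[set z | diff x z == A]| = (q - 1) ^ #|A|.
Proof.
have -> : [set z | diff x z == A] = [set z : word q n | [forall i, (x i != z i) == (i \in A)]].
  apply/setP => z; rewrite !inE; apply/eqP/forallP => [<- i|H]; first by rewrite inE.
  by apply/setP => i; rewrite inE; exact: (eqP (H i)).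
rewrite (card_fam (fun i c => (x i != c) == (i \in A))) -prod_nat_const [RHS]big_mkcond /=.
apply: eq_bigr => i _; case: (i \in A).
  by rewrite -(card_neq (x i)); apply: eq_card => c; rewrite !inE eqb_id.
rewrite -(card1 (x i)); apply: eq_card => c; rewrite !inE.
by case: (x i =P c) => [->|/eqP]; rewrite ?eqxx // eq_sym => /negbTE ->.
Qed.

Lemma card_sphere x k : #|[set z | #|diff x z| == k]| = 'C(n, k) * (q - 1) ^ k.
Proof.
rewrite -sum1_card (partition_big (fun z => diff x z) (fun A => #|A| == k)) /=;
  last by move=> z; rewrite inE.
have -> : 'C(n, k) = #|[set A : {set 'I_n} | #|A| == k]| by rewrite card_draws card_ord.
rewrite -sum_nat_const; apply: eq_big => [A|A /eqP HA]; first by rewrite inE.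
rewrite -HA -(card_eqA x) -sum1_card; apply: eq_bigl => z; rewrite !inE.
by case: (diff x z =P A) => [->|_]; rewrite ?eqxx ?andbF.
Qed.

Lemma card_ball x r : #|ball x r| = Vq q n r.
Proof.
elim: r => [|r IH].
  rewrite /Vq big_nat1 -(card_sphere x).
  by apply: eq_card => z; rewrite !inE hammingE leqn0.
have -> : ball x r.+1 = ball x r :|: [set z | #|diff x z| == r.+1].
  by apply/setP => z; rewrite !inE hammingE leq_eqVlt ltnS orbC.
rewrite cardsU IH card_sphere /Vq [RHS]big_nat_recr //=.
have -> : ball x r :&: [set z | #|diff x z| == r.+1] = set0.
  apply/setP => z; rewrite !inE hammingE; by case: (#|diff x z| =P r.+1) => [->|]; rewrite ?ltnn ?andbF.
by rewrite cards0 subn0.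
Qed.

Lemma bin_le_exp m i : 'C(m, i) <= m ^ i.
Proof.
elim: i => [|i IH]; first by rewrite bin0.
apply: leq_trans (_ : i.+1 * 'C(m, i.+1) <= _); first by rewrite leq_pmull.
rewrite mul_bin_left expnS; apply: leq_mul => //; exact: leq_subr.
Qed.

Lemma Vq_le k : 0 < n -> 0 < q -> Vq q n k <= k.+1 * (n * q) ^ k.
Proof.
move=> n0 q0; rewrite /Vq.
apply: leq_trans (_ : \sum_(0 <= i < k.+1) (n * q) ^ k <= _).
  rewrite big_nat [X in _ <= X]big_nat; apply: leq_sum => i /andP[_ Hi].
  apply: leq_trans (_ : (n * q) ^ i <= _); last first.
    by apply: leq_pexp2l; [rewrite muln_gt0 n0 | ].
  rewrite expnMn; apply: leq_mul; first exact: bin_le_exp.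
  by case: (i) => [|i']; rewrite ?expn0 // leq_exp2r // leq_subr.
by rewrite sum_nat_const_nat subn0.
Qed.

End Comb.


Lemma Vq_step q n t s : 1 < q -> 2 * t <= n -> 0 < s <= t ->
  n * Vq q n s.-1 <= 2 * t * Vq q n s.
Proof.
move=> q1 tn /andP[s0 st]; rewrite /Vq prednK // big_nat_recl // big_distrr /=.
rewrite mulnDr; apply: leq_trans (leq_addl _ _); rewrite big_distrr /=.
rewrite big_nat [X in _ <= X]big_nat; apply: leq_sum => i /andP[_ Hi].
rewrite mulnA mulnA; apply: leq_mul.
  apply: leq_trans (_ : 2 * ((n - i) * 'C(n, i)) <= _).
    rewrite mulnA; apply: leq_mul => //; lia.
  rewrite -mul_bin_left mulnA; apply: leq_mul => //; lia.
by apply: leq_pexp2l => //; lia.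
Qed.

Lemma Vq_iter q n t j : 1 < q -> 2 * t <= n -> j <= t ->
  n ^ j * Vq q n (t - j) <= (2 * t) ^ j * Vq q n t.
Proof.
move=> q1 tn; elim: j => [|j IH] jt; first by rewrite subn0.
rewrite subnS !expnS -mulnA (mulnCA n).
apply: leq_trans (_ : n ^ j * (2 * t * Vq q n (t - j)) <= _).
  apply: leq_mul => //; apply: Vq_step => //; lia.
rewrite [X in X <= _]mulnCA -[X in _ <= X]mulnA; apply: leq_mul => //; apply: IH; lia.
Qed.


Section MB.
Variables (q n t : nat).
Implicit Types (x y z : word q n).

Lemma diff_tri x y z : #|diff x y| <= #|diff x z| + #|diff z y|.
Proof.
apply: leq_trans (_ : #|diff x z :|: diff z y| <= _); last first.
  by rewrite cardsU leq_subr.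
apply: subset_leq_card; apply/subsetP => i; rewrite !inE.
by case: (x i =P z i) => [->|]; rewrite ?orbT.
Qed.

Lemma M_tri x y : 0 < #|ball x t :&: ball y t| -> hamming x y <= 2 * t.
Proof.
case/card_gt0P => z; rewrite !inE !hammingE => /andP[h1 h2].
rewrite (diffC y) in h2; have := diff_tri x y z; lia.
Qed.

Lemma card_sub_diff x (D : {set 'I_n}) : #|[set w : word q n | diff x w \subset D]| <= q ^ #|D|.
Proof.
have -> : [set w : word q n | diff x w \subset D] =
   [set w : word q n | [forall i, (x i != w i) ==> (i \in D)]].
  apply/setP => w; rewrite !inE; apply/subsetP/forallP => H i.
    by apply/implyP => hi; apply: H; rewrite inE.
  by rewrite inE => hi; exact: (implyP (H i) hi).
rewrite (card_fam (fun i c => (x i != c) ==> (i \in D))) -prod_nat_const [X in _ <= X]big_mkcond /=.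
apply: leq_prod => i _; case: (i \in D).
  by apply: leq_trans (max_card _) _; rewrite card_ord.
apply: leq_trans (_ : #|pred1 (x i)| <= 1); last by rewrite card1.
apply: subset_leq_card; apply/subsetP => c; rewrite !inE implybF negbK eq_sym.
by [].
Qed.

Lemma M_bound x y :
  #|ball x t :&: ball y t| <= q ^ hamming x y * Vq q n (t - uphalf (hamming x y)).
Proof.
set D := diff x y.
set f1 := fun z : word q n => [ffun i => if i \in D then x i else z i].
set f2 := fun z : word q n => [ffun i => if i \in D then z i else x i].
set A := ball x t :&: ball y t.
have inj : {in A &, injective (fun z => (f1 z, f2 z))}.
  move=> z1 z2 _ _ [e1 e2]; apply/ffunP => i.
  have := congr1 (fun f : word q n => f i) e1; have := congr1 (fun f : word q n => f i) e2.
  rewrite /f1 /f2 !ffunE; by case: (i \in D).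
rewrite -(card_in_imset inj).
apply: leq_trans (_ : #|setX (ball x (t - uphalf #|D|)) [set w : word q n | diff x w \subset D]| <= _).
  apply: subset_leq_card; apply/subsetP => p /imsetP [z zA ->].
  move: zA; rewrite !inE !hammingE => /andP[h1 h2]; apply/andP; split; last first.
    apply/subsetP => i; rewrite !inE /f2 ffunE !inE.
    by case: (x i =P y i) => _ /=; rewrite ?eqxx.
  have e1 : diff x (f1 z) = diff x z :\: D.
    by apply/setP => i; rewrite !inE /f1 ffunE !inE; case: (x i =P y i); rewrite ?eqxx ?andbT ?andbF.
  have e2 : diff y z :\: D = diff x z :\: D.
    apply/setP => i; rewrite !inE.
    by case: (x i =P y i) => [->|].
  have c1 := cardsID D (diff x z); have c2 := cardsID D (diff y z).
  have c3 : #|D| <= #|diff x z :&: D| + #|diff y z :&: D|.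
    apply: leq_trans (_ : #|(diff x z :&: D) :|: (diff y z :&: D)| <= _); last first.
      by rewrite cardsU leq_subr.
    apply: subset_leq_card; apply/subsetP => i; rewrite !inE.
    case: (x i =P y i) => //= ne _; rewrite !andbT.
    by case: (x i =P z i) => //= e; rewrite -e; apply/eqP => e'; apply: ne.
  rewrite e1; rewrite e2 in c2.
  have : #|D| <= (t - #|diff x z :\: D|).*2 by lia.
  rewrite -leq_uphalf_double; lia.
by rewrite cardsX card_ball mulnC leq_mul // card_sub_diff.
Qed.
End MB.


Lemma CS_nat (I : finType) (a : I -> nat) :
  (\sum_i a i) ^ 2 <= #|I| * \sum_i a i ^ 2.
Proof.
have E : (\sum_i a i) ^ 2 = \sum_i \sum_j a i * a j.
  by rewrite -mulnn big_distrl /=; apply: eq_bigr => i _; rewrite big_distrr.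
suff : 2 * (\sum_i a i) ^ 2 <= 2 * (#|I| * \sum_i a i ^ 2) by rewrite leq_pmul2l.
rewrite E big_distrr /=.
apply: leq_trans (_ : \sum_i \sum_(j : I) (a i ^ 2 + a j ^ 2) <= _).
  apply: leq_sum => i _; rewrite big_distrr /=; apply: leq_sum => j _.
  have := nat_AGM2 (a i) (a j) => /leqifP; case: ifP => _; nia.
rewrite (eq_bigr (fun i => #|I| * a i ^ 2 + \sum_j a j ^ 2)); last first.
  by move=> i _; rewrite big_split /= sum_nat_const.
rewrite big_split /= sum_nat_const -big_distrr /=.
rewrite (_ : #|xpredT| = #|I|) //.
lia.
Qed.

Lemma card_sum (T : finType) (A : {set T}) : #|A| = \sum_z (z \in A).
Proof. by rewrite -sum1_card big_mkcond /=; apply: eq_bigr => z _; case: (z \in A). Qed.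

Section Count.
Variables (q n t : nat) (S : {set word q n}).

Lemma ball_sym (y z : word q n) : (y \in ball z t) = (z \in ball y t).
Proof. by rewrite !inE !hammingE diffC. Qed.

Lemma cardIS (A : {set word q n}) : #|A :&: S| = \sum_(y in S) (y \in A).
Proof.
rewrite card_sum [RHS]big_mkcond /=; apply: eq_bigr => y _; rewrite inE.
by case: (y \in S); rewrite ?andbT ?andbF.
Qed.

Lemma sum_f : \sum_z #|ball z t :&: S| = #|S| * Vq q n t.
Proof.
rewrite (eq_bigr _ (fun z _ => cardIS (ball z t))) exchange_big /=.
rewrite -sum_nat_const; apply: eq_bigr => y _.
rewrite -(card_ball y t) card_sum; apply: eq_bigr => z _; by rewrite ball_sym.
Qed.

Lemma sum_f2 : \sum_z #|ball z t :&: S| ^ 2 =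
  \sum_(x in S) \sum_(y in S) #|ball x t :&: ball y t|.
Proof.
rewrite (eq_bigr (fun z => \sum_(x in S) \sum_(y in S) ((x \in ball z t) * (y \in ball z t))));
  last first.
  move=> z _; rewrite cardIS -mulnn big_distrl /=; apply: eq_bigr => x _.
  by rewrite big_distrr.
rewrite exchange_big /=; apply: eq_bigr => x _.
rewrite exchange_big /=; apply: eq_bigr => y _.
rewrite card_sum; apply: eq_bigr => z _.
by rewrite (ball_sym x z) (ball_sym y z) mulnb [in RHS]inE.
Qed.
End Count.


Section PerX.
Variables (q n t : nat) (S : {set word q n}).
Hypotheses (hq : 1 < q) (hn : 0 < n) (ht2 : t * t <= 100 * n) (hr : 2 * t * q ^ 2 <= n).
Local Notation V := (Vq q n t).
Local Notation M x y := #|ball x t :&: ball y t|.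
Local Notation r := (2 * t * q ^ 2).

Lemma ham0 (x : word q n) : hamming x x = 0.
Proof. by rewrite hammingE; apply/eqP; rewrite cards_eq0; apply/eqP/setP => i; rewrite !inE eqxx. Qed.

Lemma gen_bound (x y : word q n) : 0 < M x y ->
  n ^ uphalf (hamming x y) * M x y <= r ^ uphalf (hamming x y) * V.
Proof.
move=> M0; have hd := M_tri M0.
set d := hamming x y; set j := uphalf d.
have jt : j <= t by rewrite /j leq_uphalf_double -mul2n.
have dj : d <= j.*2 by rewrite -leq_uphalf_double.
have t2n : 2 * t <= n.
  apply: leq_trans hr; rewrite -{1}(muln1 (2 * t)) leq_mul2l; apply/orP; right.
  by rewrite expn_gt0; lia.
apply: leq_trans (_ : n ^ j * (q ^ d * Vq q n (t - j)) <= _).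
  by rewrite leq_mul2l M_bound orbT.
rewrite mulnCA.
apply: leq_trans (_ : q ^ d * ((2 * t) ^ j * V) <= _).
  by rewrite leq_mul2l Vq_iter ?orbT.
rewrite mulnA leq_mul2r; apply/orP; right.
rewrite [r ^ j]expnMn [X in _ <= X]mulnC leq_mul2r; apply/orP; right.
rewrite -expnM; apply: leq_pexp2l; first by lia.
by rewrite -mul2n in dj; lia.
Qed.

Lemma near_bound (x y : word q n) : M x y <= V.
Proof. by rewrite -(card_ball x t); apply: subset_leq_card; apply: subsetIl. Qed.

Lemma mid_bound (x y : word q n) : 3 <= hamming x y <= 4 -> n * M x y <= 400 * q ^ 4 * V.
Proof.
move=> hd; case: (posnP (M x y)) => [->|M0]; first by rewrite muln0.
have := gen_bound M0.
have -> : uphalf (hamming x y) = 2.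
  by case/andP: hd; case: (hamming x y) => [|[|[|[|[|k]]]]].
move=> H; rewrite -(leq_pmul2l hn).
apply: leq_trans (_ : r ^ 2 * V <= _); first by rewrite mulnA mulnn.
have : r ^ 2 = 4 * (t * t) * q ^ 4.
  rewrite -mulnn (_ : q ^ 4 = q ^ 2 * q ^ 2); [nia | by rewrite -expnD].
move=> ->; rewrite !mulnA; apply: leq_mul => //.
nia.
Qed.

Lemma expn_le_base a b e : a <= b -> a ^ e <= b ^ e.
Proof. by move=> ab; elim: e => [|e IH] //; rewrite !expnS leq_mul. Qed.

Lemma far_bound (x y : word q n) : 5 <= hamming x y ->
  n ^ 3 * M x y <= Gadj t x y * (r ^ 3 * V).
Proof.
move=> hd; case: (posnP (M x y)) => [->|M0]; first by rewrite muln0.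
have hd2 := M_tri M0.
have -> : Gadj t x y = true.
  rewrite /Gadj hd2 andbT; apply/negP => /eqP e; move: hd; by rewrite e ham0.
rewrite mul1n; have := gen_bound M0.
have j3 : 3 <= uphalf (hamming x y) by rewrite geq_uphalf_double; lia.
move: j3; set j := uphalf _ => j3 H.
rewrite -(subnKC j3) !expnD in H.
rewrite -(@leq_pmul2l (n ^ (j - 3))) ?expn_gt0 ?hn //.
apply: leq_trans (_ : r ^ 3 * r ^ (j - 3) * V <= _).
  by rewrite mulnA (mulnC _ (n ^ 3)).
rewrite (mulnC (r ^ 3)) -mulnA leq_mul2r; apply/orP; right.
exact: expn_le_base.
Qed.


Lemma deg_sum (x : word q n) : deg_in t S x = \sum_(y in S) Gadj t x y.
Proof.
rewrite /deg_in card_sum [RHS]big_mkcond /=; apply: eq_bigr => y _; rewrite inE.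
by case: (y \in S).
Qed.

Lemma per_x (x : word q n) : x \in S ->
  n ^ 3 * \sum_(y in S) M x y <= V * (2003 * n ^ 6 * q ^ 8 + maxdeg t S * r ^ 3).
Proof.
move=> xS.
rewrite (bigID (fun y => hamming x y <= 2)) /=.
rewrite [X in _ * (_ + X)](bigID (fun y => hamming x y <= 4)) /=.
rewrite !mulnDr.
have h1 : n ^ 3 * \sum_(y in S | hamming x y <= 2) M x y <= n ^ 3 * (Vq q n 2 * V).
  rewrite leq_mul2l; apply/orP; right.
  apply: leq_trans (_ : \sum_(y in S | hamming x y <= 2) V <= _).
    by apply: leq_sum => y _; exact: near_bound.
  rewrite sum_nat_const leq_mul2r; apply/orP; right.
  rewrite -(card_ball x 2); apply: subset_leq_card; apply/subsetP => y.
  by rewrite !inE => /andP[_ ->].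
have h2 : n ^ 3 * \sum_(y | (y \in S) && ~~ (hamming x y <= 2) && (hamming x y <= 4)) M x y
      <= n ^ 2 * (Vq q n 4 * (400 * q ^ 4 * V)).
  rewrite [n ^ 3]expnS (mulnC n) -mulnA.
  rewrite leq_mul2l; apply/orP; right; rewrite big_distrr /=.
  apply: leq_trans (_ : \sum_(y | (y \in S) && ~~ (hamming x y <= 2) && (hamming x y <= 4))
                         (400 * q ^ 4 * V) <= _).
    apply: leq_sum => y /andP[/andP[_ h] h']; apply: mid_bound; lia.
  rewrite sum_nat_const leq_mul2r; apply/orP; right.
  rewrite -(card_ball x 4); apply: subset_leq_card; apply/subsetP => y.
  by rewrite !inE => /andP[_ ->].
have h3 : n ^ 3 * \sum_(y | (y \in S) && ~~ (hamming x y <= 2) && ~~ (hamming x y <= 4)) M x y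
      <= maxdeg t S * (r ^ 3 * V).
  rewrite big_distrr /=.
  apply: leq_trans (_ : \sum_(y | (y \in S) && ~~ (hamming x y <= 2) && ~~ (hamming x y <= 4))
                         (Gadj t x y * (r ^ 3 * V)) <= _).
    apply: leq_sum => y /andP[/andP[_ h] h']; apply: far_bound; lia.
  apply: leq_trans (_ : \sum_(y in S) (Gadj t x y * (r ^ 3 * V)) <= _).
    rewrite [X in X <= _]big_mkcond [X in _ <= X]big_mkcond /=.
    by apply: leq_sum => y _; case: (y \in S) => //=; case: ifP.
  rewrite -big_distrl /= -deg_sum leq_mul2r; apply/orP; right.
  by rewrite /maxdeg (bigD1 x) //= leq_maxl.
have A1 : n ^ 3 * Vq q n 2 + n ^ 2 * Vq q n 4 * (400 * q ^ 4) <= 2003 * n ^ 6 * q ^ 8.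
  have v2 := Vq_le 2 hn (ltnW hq); have v4 := Vq_le 4 hn (ltnW hq).
  rewrite !expnMn in v2 v4.
  have p1 : n ^ 3 * n ^ 2 <= n ^ 6 by rewrite -expnD leq_pexp2l.
  have p2 : q ^ 2 <= q ^ 8 by rewrite leq_pexp2l //; lia.
  have p3 : n ^ 2 * n ^ 4 = n ^ 6 by rewrite -expnD.
  have p4 : q ^ 4 * q ^ 4 = q ^ 8 by rewrite -expnD.
  have e1 : n ^ 3 * (3 * (n ^ 2 * q ^ 2)) <= 3 * n ^ 6 * q ^ 8.
    move: (n ^ 3) (n ^ 2) (n ^ 6) (q ^ 2) (q ^ 8) p1 p2 => a b c d e ? ?; nia.
  have e2 : n ^ 2 * (5 * (n ^ 4 * q ^ 4)) * (400 * q ^ 4) = 2000 * n ^ 6 * q ^ 8.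
    rewrite -p3 -p4; move: (n ^ 2) (n ^ 4) (q ^ 4) => a b c; nia.
  have e3 : n ^ 3 * Vq q n 2 <= n ^ 3 * (3 * (n ^ 2 * q ^ 2)) by rewrite leq_mul2l v2 orbT.
  have e4 : n ^ 2 * Vq q n 4 * (400 * q ^ 4) <= n ^ 2 * (5 * (n ^ 4 * q ^ 4)) * (400 * q ^ 4).
    by rewrite leq_mul2r leq_mul2l v4 !orbT.
  lia.
move: h1 h2 h3 A1; set K := 2003 * _ * _; set D := maxdeg t S.
move: (n ^ 3) (n ^ 2) (Vq q n 2) (Vq q n 4) (q ^ 4) (r ^ 3) V => a b c d e f g.
move=> h1 h2 h3 A1.
have A2 : (a * c + b * d * (400 * e)) * g <= K * g by rewrite leq_mul2r A1 orbT.
clear A1; move: K A2 => K A2.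
rewrite addnA; apply: leq_trans (leq_add (leq_add h1 h2) h3) _; nia.
Qed.

End PerX.


Lemma main_nat q n t (S : {set word q n}) : 1 < q -> 0 < n -> t * t <= 100 * n ->
  2 * t * q ^ 2 <= n ->
  n ^ 3 * (#|S| * Vq q n t) ^ 2 <=
  q ^ n * (#|S| * (Vq q n t * (2003 * n ^ 6 * q ^ 8 + maxdeg t S * (2 * t * q ^ 2) ^ 3))).
Proof.
move=> hq hn ht2 hr.
have cs := CS_nat (fun z : word q n => #|ball z t :&: S|).
rewrite sum_f sum_f2 card_ffun !card_ord in cs.
have hW : n ^ 3 * (\sum_(x in S) \sum_(y in S) #|ball x t :&: ball y t|) <=
   #|S| * (Vq q n t * (2003 * n ^ 6 * q ^ 8 + maxdeg t S * (2 * t * q ^ 2) ^ 3)).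
  rewrite big_distrr /= -sum_nat_const; apply: leq_sum => x xS.
  exact: per_x.
apply: leq_trans (_ : n ^ 3 * (q ^ n * \sum_(x in S) \sum_(y in S) #|ball x t :&: ball y t|) <= _).
  by rewrite leq_mul2l cs orbT.
by rewrite mulnCA leq_mul2l hW orbT.
Qed.


Lemma fin_nat n N X K D Rr : 0 < n -> 0 < N ->
  n ^ 3 * X ^ 2 <= N * (X * (K + D * Rr)) -> n ^ 4 * N <= X ->
  2 * K * N <= n ^ 3 * (n ^ 4 * N) -> n ^ 3 * X <= 2 * N * D * Rr.
Proof.
move=> n0 N0 H1 H2 H3.
have X0 : 0 < X by apply: leq_trans H2; rewrite muln_gt0 expn_gt0 n0.
have H : n ^ 3 * X <= N * (K + D * Rr).
  rewrite -(leq_pmul2l X0).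
  have e1 : X * (n ^ 3 * X) = n ^ 3 * X ^ 2 by rewrite -mulnn mulnCA mulnA.
  have e2 : X * (N * (K + D * Rr)) = N * (X * (K + D * Rr)) by rewrite mulnCA.
  by rewrite e1 e2.
have H4 : n ^ 3 * (n ^ 4 * N) <= n ^ 3 * X by rewrite leq_mul2l H2 orbT.
move: H H3 H4; rewrite mulnDr; move: (n ^ 3 * X) (n ^ 3 * (n ^ 4 * N)) => a b.
rewrite !mulnA; lia.
Qed.



Import Order.TTheory GRing.Theory Num.Theory.
Local Open Scope ring_scope.
Lemma real_end (R : realType) (u X N D T Q V s : R) : 0 < u -> 0 < N -> 0 < V -> 0 < Q ->
  0 <= T -> 0 <= D -> T <= 10 * u -> X = s * V ->
  (u ^+ 2) ^+ 3 * X <= 2 * N * D * (2 * T * Q) ^+ 3 ->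
  (16000 * Q ^+ 3)^-1 * (u ^+ 2 * u) / (N / V) * s <= D.
Proof.
move=> u0 N0 V0 Q0 T0 D0 Tu XE H.
have T3 : T ^+ 3 <= (10 * u) ^+ 3 by apply: lerXn2r; rewrite ?nnegrE //; lra.
have H' : (u ^+ 2) ^+ 3 * X <= 16000 * N * D * Q ^+ 3 * u ^+ 3.
  apply: le_trans H _.
  have -> : 2 * N * D * (2 * T * Q) ^+ 3 = 16 * N * D * Q ^+ 3 * T ^+ 3 by ring.
  have -> : 16000 * N * D * Q ^+ 3 * u ^+ 3 = 16 * N * D * Q ^+ 3 * (10 * u) ^+ 3 by ring.
  apply: ler_wpM2l => //; apply: mulr_ge0; [apply: mulr_ge0; [apply: mulr_ge0|]|];
    rewrite ?exprn_ge0 //; lra.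
have u3 : 0 < u ^+ 3 by apply: exprn_gt0.
have H'' : u ^+ 3 * X <= 16000 * N * D * Q ^+ 3.
  rewrite -(ler_pM2r u3); apply: le_trans H'.
  by rewrite le_eqVlt; apply/orP; left; apply/eqP; ring.
have -> : (16000 * Q ^+ 3)^-1 * (u ^+ 2 * u) / (N / V) * s = u ^+ 3 * X / (16000 * N * Q ^+ 3).
  rewrite XE; field; rewrite ?mulf_neq0 ?expf_neq0 ?gt_eqF //; lra.
rewrite ler_pdivrMr; last by rewrite !mulr_gt0 ?exprn_gt0 //; lra.
apply: le_trans H'' _; rewrite le_eqVlt; apply/orP; left; apply/eqP; ring.
Qed.


Lemma Vq_gt0 q n t : (0 < Vq q n t)%N.
Proof. by rewrite /Vq big_nat_recl // bin0 expn0 mul1n. Qed.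

Unset Implicit Arguments. Set Strict Implicit.
Theorem lemma2p1 (R : realType) (q : nat) (hq : (2 <= q)%N) :
  exists (c : R) (n0 : nat), 0 < c /\
    forall (n t : nat), (n0 <= n)%N -> (0 < t)%N ->
      (t%:R <= 10 * Num.sqrt (n%:R : R)) ->
      forall S : {set word q n},
        (n%:R ^+ 4 * Hq R q n t <= (#|S|)%:R) ->
        c * (n%:R * Num.sqrt (n%:R : R)) / Hq R q n t * (#|S|)%:R
          <= (maxdeg t S)%:R.
Proof.
exists (16000 * ((q ^ 2)%:R : R) ^+ 3)^-1, (4006 * q ^ 8)%N; split.
  by rewrite invr_gt0 mulr_gt0 ?exprn_gt0 ?ltr0n ?expn_gt0 //; lia.
move=> n t hn0 ht0 htn S hS.
have q0 : (0 < q)%N by lia.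
have q8 : (1 <= q ^ 8)%N by rewrite expn_gt0 q0.
have q48 : (q ^ 4 <= q ^ 8)%N by rewrite leq_pexp2l.
have hn : (0 < n)%N by lia.
set u := Num.sqrt (n%:R : R).
have u0 : 0 < u by rewrite sqrtr_gt0 ltr0n.
have uu : u * u = n%:R by rewrite -expr2 sqr_sqrtr ?ler0n.
have ht2 : (t * t <= 100 * n)%N.
  rewrite -(ler_nat R) natrM natrM.
  have : t%:R * t%:R <= (10 * u) * (10 * u) :> R by apply: ler_pM; rewrite ?ler0n.
  have -> : (10 * u) * (10 * u) = 100%:R * (u * u) :> R.
    by rewrite -[100%N]/(10 * 10)%N natrM mulrACA.
  by rewrite uu.
have hr : (2 * t * q ^ 2 <= n)%N.
  rewrite -leq_sqr.
  have -> : ((2 * t * q ^ 2) ^ 2 = 4 * (t * t) * q ^ 4)%N.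
    rewrite (_ : q ^ 4 = q ^ 2 * q ^ 2)%N ?(expnD q 2 2) //.
    rewrite -mulnn; move: (q ^ 2)%N => a; nia.
  apply: leq_trans (_ : 400 * n * q ^ 4 <= _)%N; first by nia.
  by rewrite -mulnn; nia.
have Mn := main_nat S (hq : (1 < q)%N) hn ht2 hr.
have V0 := Vq_gt0 q n t.
have N0 : (0 < q ^ n)%N by rewrite expn_gt0 q0.
have H2 : (n ^ 4 * q ^ n <= #|S| * Vq q n t)%N.
  rewrite -(ler_nat R) natrM natrM natrX.
  move: hS; rewrite /Hq mulrA ler_pdivrMr ?ltr0n //.
have H3 : (2 * (2003 * n ^ 6 * q ^ 8) * q ^ n <= n ^ 3 * (n ^ 4 * q ^ n))%N.
  have -> : (n ^ 3 * (n ^ 4 * q ^ n) = n ^ 6 * n * q ^ n)%N.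
    by rewrite mulnA -expnD -expnSr.
  rewrite leq_mul2r; apply/orP; right.
  move: (n ^ 6)%N (q ^ 8)%N hn0 => a b hb; nia.
rewrite [(#|S| * (_ * _))%N]mulnA in Mn.
have Fn := fin_nat hn N0 Mn H2 H3.
rewrite /Hq -[X in X * u]uu -expr2.
apply: (real_end (T := t%:R) (X := (#|S| * Vq q n t)%:R)) => //.
- by rewrite ltr0n.
- by rewrite ltr0n.
- by rewrite ltr0n expn_gt0 q0.
- by rewrite natrM.
- rewrite expr2 uu; move: Fn; rewrite -(ler_nat R) !natrM !natrX.
  by [].
Qed.
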